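(* Let $G$ be a connected graph on $X$. For every $k\ge1$, the collection $\mathcal C_k$ is chain-vanishing. In particular, if $G$ is multi-ended, the collection of thin cuts is chain-vanishing.
   Context: A graph on $X$ is an irreflexive symmetric relation $G\subseteq X^2$. For $A\subseteq X$, $\delta A$ is the set of edges with one endpoint in $A$ and the other in $X\setminus A$. A cut is a set $A\subseteq X$ with $A$ and $X\setminus A$ infinite and $\delta A$ finite; $G$ is multi-ended if it has a cut; a cut is thin if $|\delta A|$ is minimal among all cuts. A cut $A$ is neat if the induced subgraphs on $A$ and on $X\setminus A$ are connected; $\mathcal C_k$ is the set of neat cuts $A$ with $|\delta A|=k$. A chain is a sequence $(A_n)_{n\in\mathbb N}$ strictly increasing or strictly decreasing under inclusion. For a collection $\mathcal S$ of subsets, a decreasing (resp. increasing) chain is $\mathcal S$-vanishing if there is no $B\in\mathcal S$ with $B\subseteq A_n$ (resp. $B\cap A_n=\emptyset$) for all $n$; $\mathcal S$ is chain-vanishing if every chain of members of $\mathcal S$ is $\mathcal S$-vanishing. *)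

(* Defs.v *)
From Stdlib Require Import List Relation_Operators.
Import ListNotations.

Section Defs.
Variable X : Type.

Definition is_graph (G : X -> X -> Prop) : Prop :=
  (forall x, ~ G x x) /\ (forall x y, G x y -> G y x).

Definition has_card {T : Type} (P : T -> Prop) (n : nat) : Prop :=
  exists l : list T, NoDup l /\ length l = n /\ (forall t, In t l <-> P t).

Definition finite {T : Type} (P : T -> Prop) : Prop :=
  exists l : list T, forall t, P t -> In t l.

Definition infinite {T : Type} (P : T -> Prop) : Prop := ~ finite P.

Definition compl (A : X -> Prop) : X -> Prop := fun x => ~ A x.

(* delta A: edges with one endpoint in A and the other outside A.  Each
   (unordered) such edge is represented exactly once as the ordered pair
   (x, y) with x in A and y not in A. *)
Definition delta (G : X -> X -> Prop) (A : X -> Prop) : X * X -> Prop :=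
  fun p => G (fst p) (snd p) /\ A (fst p) /\ ~ A (snd p).

Definition connected_on (G : X -> X -> Prop) (S : X -> Prop) : Prop :=
  forall x y, S x -> S y ->
    clos_refl_trans X (fun u v => G u v /\ S u /\ S v) x y.

Definition connected (G : X -> X -> Prop) : Prop :=
  connected_on G (fun _ => True).

Definition is_cut (G : X -> X -> Prop) (A : X -> Prop) : Prop :=
  infinite A /\ infinite (compl A) /\ finite (delta G A).

Definition multi_ended (G : X -> X -> Prop) : Prop :=
  exists A, is_cut G A.

Definition thin_cut (G : X -> X -> Prop) (A : X -> Prop) : Prop :=
  is_cut G A /\ exists n, has_card (delta G A) n /\
    forall B m, is_cut G B -> has_card (delta G B) m -> n <= m.

Definition neat (G : X -> X -> Prop) (A : X -> Prop) : Prop :=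
  is_cut G A /\ connected_on G A /\ connected_on G (compl A).

Definition C (G : X -> X -> Prop) (k : nat) : (X -> Prop) -> Prop :=
  fun A => neat G A /\ has_card (delta G A) k.

Definition subset (A B : X -> Prop) : Prop := forall x, A x -> B x.
Definition strict_subset (A B : X -> Prop) : Prop := subset A B /\ ~ subset B A.

Definition increasing_chain (A : nat -> X -> Prop) : Prop :=
  forall n, strict_subset (A n) (A (S n)).
Definition decreasing_chain (A : nat -> X -> Prop) : Prop :=
  forall n, strict_subset (A (S n)) (A n).

Definition vanishing_decr (SS : (X -> Prop) -> Prop) (A : nat -> X -> Prop) : Prop :=
  ~ exists B, SS B /\ forall n, subset B (A n).
Definition vanishing_incr (SS : (X -> Prop) -> Prop) (A : nat -> X -> Prop) : Prop :=
  ~ exists B, SS B /\ forall n x, B x -> A n x -> False.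

Definition chain_vanishing (SS : (X -> Prop) -> Prop) : Prop :=
  forall A : nat -> X -> Prop, (forall n, SS (A n)) ->
    (decreasing_chain A -> vanishing_decr SS A) /\
    (increasing_chain A -> vanishing_incr SS A).

End Defs.

(* Main.v *)
Require Import Defs.
From Stdlib Require Import List Relation_Operators Classical Lia Arith FinFun.
Import ListNotations.

Lemma crossing {T} (R : T -> T -> Prop) (P : T -> Prop) a b :
  clos_refl_trans T R a b -> P a -> ~ P b -> exists u v, R u v /\ P u /\ ~ P v.
Proof.
  induction 1; intros Pa Pb.
  - eauto.
  - contradiction.
  - destruct (classic (P y)); eauto.
Qed.

Lemma enum_bounded {T} (P : T -> Prop) k :
  (forall l, NoDup l -> (forall t, In t l -> P t) -> length l <= k) ->
  exists l, NoDup l /\ forall t, In t l <-> P t.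
Proof.
  intros Hb.
  assert (H : forall f l, NoDup l -> (forall t, In t l -> P t) -> k < length l + f ->
     exists l', NoDup l' /\ forall t, In t l' <-> P t).
  { induction f; intros l Hn Hi Hlt.
    - specialize (Hb l Hn Hi). lia.
    - destruct (classic (forall t, P t -> In t l)) as [Hc|Hc].
      + exists l. split; auto. intros t; split; auto.
      + apply not_all_ex_not in Hc as [t Ht].
        apply imply_to_and in Ht as [Pt Nt].
        apply (IHf (t :: l)).
        * constructor; auto.
        * intros t' [<-|I]; auto.
        * simpl. lia. }
  apply (H (S k) []); simpl; try lia; try constructor; tauto.
Qed.

Lemma mono (X : Type) (A : nat -> X -> Prop) :
  (forall n x, A (S n) x -> A n x) -> forall m p x, m <= p -> A p x -> A m x.
Proof.
  intros Hd m p x Hle. induction Hle; auto.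
Qed.

Definition Dint (X : Type) (A : nat -> X -> Prop) : X -> Prop := fun x => forall n, A n x.

Lemma ev_list X (A : nat -> X -> Prop) :
  (forall n x, A (S n) x -> A n x) ->
  forall l : list (X*X), (forall e, In e l -> ~ Dint X A (snd e)) ->
  exists N, forall e, In e l -> ~ A N (snd e).
Proof.
  intros Hd l. induction l as [|e l IH]; intros Hl.
  - exists 0. intros e [].
  - destruct IH as [N HN]. { intros; apply Hl; simpl; auto. }
    assert (He := Hl e (or_introl eq_refl)).
    unfold Dint in He. apply not_all_ex_not in He as [m Hm].
    exists (max m N). intros e' [<-|I] H.
    + apply Hm. apply (mono X A Hd m (max m N)); [lia|exact H].
    + apply (HN e' I). apply (mono X A Hd N (max m N)); [lia|exact H].
Qed.

Lemma core X G (A : nat -> X -> Prop) k :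
  (forall n x, A (S n) x -> A n x) ->
  (forall n, exists x, A n x /\ ~ A (S n) x) ->
  (forall n l, NoDup l -> (forall e, In e l -> delta X G (A n) e) -> length l <= k) ->
  exists lD N, NoDup lD /\ (forall e, In e lD <-> delta X G (Dint X A) e) /\
    (forall e, In e lD -> ~ A N (snd e)) /\ exists x, A N x /\ ~ Dint X A x.
Proof.
  intros Hd Hs Hb.
  destruct (enum_bounded (delta X G (Dint X A)) k) as [lD [HnD HiD]].
  { intros l Hn Hi.
    destruct (ev_list X A Hd l) as [N HN].
    { intros e I. apply Hi in I. destruct I as (_&_&H). exact H. }
    apply (Hb N l Hn). intros e I. destruct (Hi e I) as (Hg&H1&_).
    split; [exact Hg|split; [apply H1|apply HN; exact I]]. }
  destruct (ev_list X A Hd lD) as [N HN].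
  { intros e I. apply HiD in I. destruct I as (_&_&H). exact H. }
  exists lD, N. split; [exact HnD|split; [exact HiD|split; [exact HN|]]].
  destruct (Hs N) as [x [Hx Hx']]. exists x. split; [exact Hx|]. intros Dx. apply Hx', Dx.
Qed.

Lemma finish_conn X G (A : nat -> X -> Prop) k :
  (forall n x, A (S n) x -> A n x) ->
  (forall n, exists x, A n x /\ ~ A (S n) x) ->
  (forall n l, NoDup l -> (forall e, In e l -> delta X G (A n) e) -> length l <= k) ->
  (forall n, connected_on X G (A n)) ->
  (exists d, Dint X A d) -> False.
Proof.
  intros Hd Hs Hb Hc [d Dd].
  destruct (core X G A k Hd Hs Hb) as (lD&N&_&HiD&HN&x&Ax&Dx).
  assert (Ad : A N d) by apply Dd.
  destruct (crossing _ (Dint X A) d x (Hc N d x Ad Ax) Dd Dx) as (u&v&(Guv&Au&Av)&Du&Dv).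
  apply (HN (u,v)); [apply HiD; repeat split; auto | exact Av].
Qed.

Lemma finish_thin X G (A : nat -> X -> Prop) k :
  (forall x y, G x y -> G y x) ->
  (forall n x, A (S n) x -> A n x) ->
  (forall n, exists x, A n x /\ ~ A (S n) x) ->
  (forall n l, NoDup l -> (forall e, In e l -> delta X G (A n) e) -> length l <= k) ->
  connected X G ->
  (forall l, NoDup l -> (forall e, In e l <-> delta X G (Dint X A) e) -> k <= length l) ->
  (exists d, Dint X A d) -> False.
Proof.
  intros Hsym Hd Hs Hb Hc Hmin [d Dd].
  destruct (core X G A k Hd Hs Hb) as (lD&N&HnD&HiD&HN&x&Ax&Dx).
  destruct (crossing _ (fun y => A N y /\ ~ Dint X A y) x d (Hc x d I I) (conj Ax Dx))
    as (u&v&(Guv&_&_)&[Au Du]&Pv).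
  { intros [_ H]; exact (H Dd). }
  destruct (classic (Dint X A v)) as [Dv|Dv].
  - apply (HN (v,u)); [apply HiD; repeat split; auto | exact Au].
  - assert (Av : ~ A N v) by (intros Av; exact (Pv (conj Av Dv))).
    assert (Hl := Hb N ((u,v)::lD)).
    assert (Hm := Hmin lD HnD HiD).
    assert (H : length ((u,v)::lD) <= k).
    { apply Hl.
      - constructor; auto. intros I'. apply HiD in I'. destruct I' as (_&H&_). exact (Du H).
      - intros e [<-|I']. repeat split; auto.
        destruct (HiD e) as [H1 _]. destruct (H1 I') as (Hg&H2&_).
        split; [exact Hg|split; [apply H2|apply HN; exact I']]. }
    simpl in H. lia.
Qed.

Definition sw {X} (e : X * X) : X * X := (snd e, fst e).

Lemma sw_inj {X} : Injective (@sw X).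
Proof. intros [a b] [c d] H; unfold sw in H; simpl in H; inversion H; auto. Qed.

Lemma card_bound X (P : X * X -> Prop) n :
  has_card P n -> forall l, NoDup l -> (forall e, In e l -> P e) -> length l <= n.
Proof.
  intros [l' [Hn [Hl Hi]]] l Hnd Hil. rewrite <- Hl.
  apply NoDup_incl_length; auto. intros e I. apply Hi, Hil, I.
Qed.

Lemma compl_delta X G (P : X -> Prop) e :
  (forall x y, G x y -> G y x) ->
  delta X G (compl X P) e <-> delta X G P (sw e).
Proof.
  intros Hsym. destruct e as [u v]. unfold delta, compl, sw; simpl. split.
  - intros (H1&H2&H3). split; auto. split; auto. apply NNPP; auto.
  - intros (H1&H2&H3). split; auto.
Qed.

Lemma compl_bound X G (B : X -> Prop) n :
  (forall x y, G x y -> G y x) ->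
  has_card (delta X G B) n ->
  forall l, NoDup l -> (forall e, In e l -> delta X G (compl X B) e) -> length l <= n.
Proof.
  intros Hsym Hc l Hn Hi.
  rewrite <- (length_map sw l). eapply card_bound; eauto.
  - apply Injective_map_NoDup; auto. apply sw_inj.
  - intros e I. apply in_map_iff in I as [e' [<- I]]. apply compl_delta; auto.
Qed.

Lemma not_subset X (A B : X -> Prop) : ~ subset X A B -> exists x, A x /\ ~ B x.
Proof.
  intros H. unfold subset in H. apply not_all_ex_not in H as [x Hx].
  exists x. apply imply_to_and, Hx.
Qed.

Lemma infinite_ex X (B : X -> Prop) : infinite B -> exists b, B b.
Proof.
  intros H. apply NNPP. intros Hn. apply H. exists []. intros t Bt. apply Hn. eauto.
Qed.

Lemma infinite_mono X (P Q : X -> Prop) : infinite P -> (forall x, P x -> Q x) -> infinite Q.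
Proof. intros H Hs [l Hl]. apply H. exists l. auto. Qed.

Theorem mainTheorem15 (X : Type) (G : X -> X -> Prop) :
  is_graph X G -> connected X G ->
  (forall k : nat, 1 <= k -> chain_vanishing X (C X G k)) /\
  (multi_ended X G -> chain_vanishing X (thin_cut X G)).
Proof.
  intros [Hirr Hsym] Hconn. split.
  - intros k Hk A HA. split.
    + intros Hdec [B [HB Hsub]].
      apply (finish_conn X G A k).
      * intros n x H. apply (proj1 (Hdec n)), H.
      * intros n. apply not_subset, (proj2 (Hdec n)).
      * intros n l Hn Hi. destruct (HA n) as [_ Hc]. eapply card_bound; eauto.
      * intros n. apply (HA n).
      * destruct HB as [[[Hinf _] _] _]. destruct (infinite_ex _ _ Hinf) as [b Hb].
        exists b. intros n. apply Hsub, Hb.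
    + intros Hinc [B [HB Hdis]].
      apply (finish_conn X G (fun n => compl X (A n)) k).
      * intros n x H H'. apply H, (proj1 (Hinc n)), H'.
      * intros n. destruct (not_subset _ _ _ (proj2 (Hinc n))) as [x [H1 H2]].
        exists x. split; auto.
      * intros n l Hn Hi. destruct (HA n) as [_ Hc]. eapply compl_bound; eauto.
      * intros n. apply (HA n).
      * destruct HB as [[[Hinf _] _] _]. destruct (infinite_ex _ _ Hinf) as [b Hb].
        exists b. intros n Ab. exact (Hdis n b Hb Ab).
  - intros _ A HA.
    destruct (HA 0) as [Hcut0 [n0 [Hc0 Hmin0]]].
    assert (Hbd : forall N, exists nN, has_card (delta X G (A N)) nN /\ nN <= n0).
    { intros N. destruct (HA N) as [_ [nN [HcN HminN]]]. exists nN. split; auto.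
      apply (HminN (A 0)); auto. }
    split.
    + intros Hdec [B [HB Hsub]].
      destruct HB as [[HBinf _] _].
      apply (finish_thin X G A n0); auto.
      * intros n x H. apply (proj1 (Hdec n)), H.
      * intros n. apply not_subset, (proj2 (Hdec n)).
      * intros n l Hn Hi. destruct (Hbd n) as [nN [HcN Hle]].
        eapply Nat.le_trans; [eapply card_bound; eauto | exact Hle].
      * intros l Hn Hi. apply (Hmin0 (Dint X A)).
        -- split; [|split].
           ++ apply (infinite_mono _ B); auto. intros x Bx n. apply Hsub, Bx.
           ++ destruct Hcut0 as [_ [H _]]. apply (infinite_mono _ _ _ H).
              intros x Hx Dx. apply Hx, Dx.
           ++ exists l. intros t Ht. apply Hi, Ht.
        -- exists l. split; [exact Hn|]. split; [reflexivity|]. intros t. apply Hi.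
      * destruct (infinite_ex _ _ HBinf) as [b Hb].
        exists b. intros n. apply Hsub, Hb.
    + intros Hinc [B [HB Hdis]].
      destruct HB as [[HBinf _] _].
      apply (finish_thin X G (fun n => compl X (A n)) n0); auto.
      * intros n x H H'. apply H, (proj1 (Hinc n)), H'.
      * intros n. destruct (not_subset _ _ _ (proj2 (Hinc n))) as [x [H1 H2]].
        exists x. split; auto.
      * intros n l Hn Hi. destruct (Hbd n) as [nN [HcN Hle]].
        eapply Nat.le_trans; [eapply compl_bound; eauto | exact Hle].
      * intros l Hn Hi.
        rewrite <- (length_map sw l).
        apply (Hmin0 (compl X (Dint X (fun n => compl X (A n))))).
        -- split; [|split].
           ++ destruct Hcut0 as [H _]. apply (infinite_mono _ _ _ H).
              intros x Ax Dx. exact (Dx 0 Ax).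
           ++ apply (infinite_mono _ B); auto. intros x Bx Dx. apply Dx.
              intros n Ax. exact (Hdis n x Bx Ax).
           ++ exists (map sw l). intros t Ht. apply in_map_iff. exists (sw t).
              split; [destruct t; reflexivity|]. apply Hi. apply compl_delta; auto.
        -- exists (map sw l). split; [apply Injective_map_NoDup; auto; apply sw_inj|].
           split; auto. intros t. rewrite compl_delta by auto. rewrite in_map_iff. split.
           ++ intros [e [<- I]]. apply Hi in I. destruct e; exact I.
           ++ intros Ht. exists (sw t). split; [destruct t; reflexivity|]. apply Hi, Ht.
      * destruct (infinite_ex _ _ HBinf) as [b Hb].
        exists b. intros n Ab. exact (Hdis n b Hb Ab).
Qed.
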